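(* Let $f:\mathcal{P}^n\to X$ be an onto, efficient, anonymous and tops-only rule. Then $f$ is NOM if and only if either $V_i=\emptyset$ for each $i\in N$, or there is $y\in X$ such that $SV_i=V_i=\{y\}$ for each $i\in N$.
   Context: $N=\{1,\dots,n\}$, $n\ge2$, agents; $X$ finite alternatives, $|X|\ge2$; $\mathcal{P}$ all strict linear orders on $X$; $t(P_i)$ the top of $P_i$. A rule $f:\mathcal{P}^n\to X$ is onto; tops-only if $f(P)=f(P')$ whenever all tops coincide; efficient if for each $P$ there is no $x$ with $xP_if(P)$ for all $i$; anonymous if $f(P_1,\dots,P_n)=f(P_{\sigma(1)},\dots,P_{\sigma(n)})$ for every permutation $\sigma$ of $N$. Option set $O^f(P_i)=\{f(P_i,P_{-i}):P_{-i}\in\mathcal{P}^{n-1}\}$. $P_i'$ is a manipulation at $P_i$ if $f(P_i',P_{-i})P_if(P_i,P_{-i})$ for some $P_{-i}$; it is obvious if the $P_i$-worst element of $O^f(P_i')$ is strictly $P_i$-better than that of $O^f(P_i)$, or the $P_i$-best element of $O^f(P_i')$ is strictly $P_i$-better than that of $O^f(P_i)$. $f$ is NOM if there are no obvious manipulations. Agent $i$ vetoes $x$ via $P_i$ if $x\notin O^f(P_i)$; $V_i$ = alternatives $i$ vetoes via some preference; $\mathcal{V}_i^x$ = preferences via which $i$ vetoes $x$; $i$ strongly vetoes $x$ if $\mathcal{V}_i^x=\{P_i:t(P_i)\ne x\}$; $SV_i$ = set of alternatives strongly vetoed by $i$. *)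

(* Defs.v *)
From mathcomp Require Import all_boot all_fingroup.
Set Implicit Arguments. Unset Strict Implicit. Unset Printing Implicit Defensive.

(* A strict linear order on a finite set X of alternatives.
   [prel P x y] means "x is strictly preferred to y under P". *)
Record pref (X : finType) := Pref {
  prel : rel X;
  prel_irr : irreflexive prel;
  prel_trans : transitive prel;
  prel_total : forall x y, x != y -> prel x y || prel y x }.

Section SCF.
Variables (n : nat) (X : finType).

Definition profile := 'I_n -> pref X.
Definition rule := profile -> X.

Definition is_top (P : pref X) (x : X) : Prop :=
  forall y, y != x -> prel P x y.

Definition upd (Q : profile) (i : 'I_n) (Pi : pref X) : profile :=
  fun j => if j == i then Pi else Q j.

Definition onto (f : rule) : Prop := forall x, exists P, f P = x.

Definition tops_only (f : rule) : Prop :=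
  forall P P' : profile,
    (forall i x, is_top (P i) x <-> is_top (P' i) x) -> f P = f P'.

Definition efficient (f : rule) : Prop :=
  forall P : profile, ~ exists x, forall i, prel (P i) x (f P).

Definition anonymous (f : rule) : Prop :=
  forall (P : profile) (s : {perm 'I_n}), f (fun i => P (s i)) = f P.

Definition option_set (f : rule) (i : 'I_n) (Pi : pref X) (x : X) : Prop :=
  exists Q : profile, f (upd Q i Pi) = x.

Definition is_worst (P : pref X) (S : X -> Prop) (w : X) : Prop :=
  S w /\ forall y, S y -> y != w -> prel P y w.
Definition is_best (P : pref X) (S : X -> Prop) (b : X) : Prop :=
  S b /\ forall y, S y -> y != b -> prel P b y.

Definition manipulation (f : rule) (i : 'I_n) (Pi Pi' : pref X) : Prop :=
  exists Q : profile, prel Pi (f (upd Q i Pi')) (f (upd Q i Pi)).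

Definition obvious_manipulation (f : rule) (i : 'I_n) (Pi Pi' : pref X) : Prop :=
  manipulation f i Pi Pi' /\
  ((exists w' w, is_worst Pi (option_set f i Pi') w' /\
                 is_worst Pi (option_set f i Pi) w /\ prel Pi w' w) \/
   (exists b' b, is_best Pi (option_set f i Pi') b' /\
                 is_best Pi (option_set f i Pi) b /\ prel Pi b' b)).

Definition NOM (f : rule) : Prop :=
  forall i Pi Pi', ~ obvious_manipulation f i Pi Pi'.

Definition vetoes (f : rule) (i : 'I_n) (x : X) : Prop :=
  exists Pi, ~ option_set f i Pi x.

Definition strongly_vetoes (f : rule) (i : 'I_n) (x : X) : Prop :=
  forall Pi, ~ option_set f i Pi x <-> ~ is_top Pi x.

End SCF.

(* Main.v *)
Require Import Defs.
From mathcomp Require Import all_boot all_fingroup.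
From Stdlib Require Import Classical.
Set Implicit Arguments. Unset Strict Implicit. Unset Printing Implicit Defensive.

Section Aux.
Variable X : finType.

Lemma prel_asym (P : pref X) x y : prel P x y -> prel P y x -> False.
Proof. move=> h1 h2; have := prel_trans h1 h2; by rewrite prel_irr. Qed.

Lemma ext_ex (R : rel X) (S : X -> Prop) :
  (forall x y z, R x y -> R y z -> R x z) ->
  (forall x y, x != y -> R x y || R y x) ->
  (exists z, S z) -> exists m, S m /\ forall y, S y -> y != m -> R m y.
Proof.
move=> tr tot [z0 Sz0].
suff H : forall s : seq X, (exists z, S z /\ z \in s) ->
   exists m, S m /\ forall y, S y -> y \in s -> y != m -> R m y.
  have [|m [Sm Hm]] := H (enum X); first by exists z0; rewrite mem_enum.
  by exists m; split=> // y Sy; apply: Hm; rewrite ?mem_enum.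
elim=> [|x s IH] [z [Sz]]; first by rewrite in_nil.
rewrite in_cons => zin.
case: (classic (exists z, S z /\ z \in s)) => [ex|nex].
  have [m [Sm Hm]] := IH ex.
  case: (classic (S x)) => Sx; last first.
    exists m; split=> // y Sy; rewrite in_cons => /orP [/eqP eyx|yin]; last exact: Hm.
    by subst y.
  case: (eqVneq x m) => [exm|nxm].
    subst x. exists m; split=> // y Sy; rewrite in_cons => /orP [/eqP ->|yin]; first by rewrite eqxx.
    exact: Hm.
  have /orP [Rxm|Rmx] := tot _ _ nxm.
    exists x; split=> // y Sy; rewrite in_cons => /orP [/eqP ->|yin]; first by rewrite eqxx.
    move=> nyx. case: (eqVneq y m) => [->//|nym]. exact: tr Rxm (Hm y Sy yin nym).
  exists m; split=> // y Sy; rewrite in_cons => /orP [/eqP ->|yin] nym; first by [].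
  exact: Hm.
exists x.
have zx : z = x.
  case/orP: zin => [/eqP //|zs]. by exfalso; apply: nex; exists z.
subst z; split=> // y Sy; rewrite in_cons => /orP [/eqP ->|yin]; first by rewrite eqxx.
by exfalso; apply: nex; exists y.
Qed.

Lemma top_ex (P : pref X) (x0 : X) : exists a, is_top P a.
Proof.
have [m [_ Hm]] := @ext_ex (prel P) (fun _ => True) (fun x y z => @prel_trans _ P y x z)
   (@prel_total _ P) (ex_intro _ x0 I).
by exists m => y; apply: Hm.
Qed.

Lemma worst_ex (P : pref X) (S : X -> Prop) : (exists z, S z) -> exists w, is_worst P S w.
Proof.
move=> ex.
have tot : forall x y, x != y -> prel P y x || prel P x y.
  by move=> x y nxy; rewrite orbC; apply: prel_total.
have [m [Sm Hm]] := @ext_ex (fun u v => prel P v u) S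
   (fun x y z h1 h2 => prel_trans h2 h1) tot ex.
by exists m.
Qed.

Lemma top_uniq (P : pref X) a b : is_top P a -> is_top P b -> a = b.
Proof.
move=> ta tb; case: (eqVneq a b) => // nab; exfalso.
apply: (@prel_asym P a b); [apply: ta; by rewrite eq_sym | exact: tb].
Qed.

Lemma top_same (P P' : pref X) a : is_top P a -> is_top P' a ->
  forall x, is_top P x <-> is_top P' x.
Proof.
move=> ta ta' x; split=> t.
  by rewrite -(top_uniq ta t).
by rewrite -(top_uniq ta' t).
Qed.

Definition rk (a b c : X) (z : X) : nat :=
  if z == a then 0 else if z == b then 1 else if z == c then #|X|.+2
  else (enum_rank z).+2.

Lemma rk_inj a b c : injective (rk a b c).
Proof.
move=> z w; rewrite /rk.
have hz := ltn_ord (enum_rank z); have hw := ltn_ord (enum_rank w).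
repeat (case: ifP => [/eqP -> | _]);
try (by []); try (by move=> []); try (by move=> [] /eqP);
try (move=> [] e; rewrite e ltnn in hz hw; done);
try (move=> [] e; rewrite -e ltnn in hz hw; done).
by move=> [] /ord_inj /enum_rank_inj.
Qed.

Definition mk (a b c : X) : pref X.
Proof.
refine (@Pref X (fun x y => rk a b c x < rk a b c y) _ _ _).
- by move=> x; rewrite ltnn.
- by move=> y x z h1 h2; apply: ltn_trans h1 h2.
- move=> x y nxy; rewrite -neq_ltn; apply: contra nxy => /eqP /rk_inj ->.
  by [].
Defined.

Lemma mk_top a b c : is_top (mk a b c) a.
Proof.
move=> y ya; rewrite /= /rk eqxx (negbTE ya).
by case: ifP => //; case: ifP.
Qed.

Lemma mk_second a b c z : b != a -> z != a -> z != b -> prel (mk a b c) b z.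
Proof.
move=> ba za zb; rewrite /= /rk (negbTE ba) eqxx (negbTE za) (negbTE zb).
by case: ifP.
Qed.

Lemma mk_last a c y : a != c -> y != c -> prel (mk a a c) y c.
Proof.
move=> ac yc; rewrite /= /rk [c == a]eq_sym (negbTE ac) (negbTE yc) eqxx.
case: ifP => // _; case: ifP => // _.
by rewrite !ltnS; exact: (ltn_ord (enum_rank y)).
Qed.

End Aux.
Arguments mk_top {X} a b c.

Section Main.
Variables (n : nat) (X : finType) (f : rule n X).

Lemma to_eq (P P' : profile n X) : tops_only f -> (forall j, P j = P' j) -> f P = f P'.
Proof. move=> T h; apply: T => j x; by rewrite h. Qed.

Lemma eff_all (P : profile n X) a : efficient f -> (forall j, is_top (P j) a) -> f P = a.
Proof.
move=> E h; case: (eqVneq (f P) a) => // ne; exfalso; apply: (E P); exists a => j.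
exact: h j (f P) ne.
Qed.

Lemma O_top i (Pi : pref X) a : efficient f -> is_top Pi a -> option_set f i Pi a.
Proof.
move=> E ta; exists (fun _ => Pi); apply: eff_all => // j.
by rewrite /upd; case: ifP.
Qed.

Lemma O_tops i (P P' : pref X) z : tops_only f ->
  (forall x, is_top P x <-> is_top P' x) ->
  option_set f i P z -> option_set f i P' z.
Proof.
move=> T hP [Q hQ]; exists Q; rewrite -hQ; apply: T => j x; rewrite /upd.
case: (j == i) => //; exact: iff_sym (hP x).
Qed.

Lemma O_self i (R : profile n X) : tops_only f -> option_set f i (R i) (f R).
Proof.
move=> T; exists R; apply: to_eq => // j; rewrite /upd.
by case: eqP => // ->.
Qed.

Lemma anon i j (P : pref X) x : anonymous f -> tops_only f ->
  option_set f i P x -> option_set f j P x.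
Proof.
move=> A T [Q hQ]; pose s := tperm i j; exists (fun k => Q (s k)).
rewrite -hQ -(A (upd Q i P) s); apply: to_eq => // k; rewrite /upd.
have -> : (s k == i) = (k == j) by rewrite (canF_eq (tpermK i j)) tpermL.
by case: ifP.
Qed.

Lemma veto_anon i j x : anonymous f -> tops_only f ->
  vetoes f i x -> vetoes f j x.
Proof.
move=> A T [P h]; exists P => O; apply: h; exact: anon _ A T O.
Qed.

Lemma veto_strong i (Pa Pb : pref X) x :
  efficient f -> tops_only f -> NOM f ->
  ~ option_set f i Pa x -> ~ is_top Pb x -> ~ option_set f i Pb x.
Proof.
move=> E T N nOa ntb Ob.
have [b tb] := top_ex Pb x.
have bx : b != x by apply/eqP => ebx; apply: ntb; rewrite -ebx.
pose P := mk b b x.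
have OP : option_set f i P x := O_tops T (top_same tb (mk_top b b x)) Ob.
have [a ta] := top_ex Pa x.
have [w' [Ow' Hw']] := worst_ex P (ex_intro _ a (O_top i E ta)).
have w'x : w' != x by apply/eqP => e; apply: nOa; rewrite -e.
apply: (N i P Pa); split.
  case: OP => Q hQ; exists Q; rewrite hQ; apply: mk_last => //.
  apply/eqP => h; apply: nOa; by exists Q.
left; exists w', x; split; first by split.
split; last exact: mk_last.
split => // y _ yx; exact: mk_last.
Qed.

Lemma two_vetoes x y : efficient f -> tops_only f -> 1 < n -> x != y ->
  (forall i, strongly_vetoes f i x) -> (forall i, strongly_vetoes f i y) -> False.
Proof.
move=> E T n1 xy Sx Sy.
have n0 : 0 < n by apply: ltn_trans n1.
pose i := Ordinal n0; pose j := Ordinal n1.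
have ij : i != j by [].
pose A := mk x y x; pose B := mk y x y.
pose R : profile n X := fun k => if k == j then B else A.
have : f R = x \/ f R = y.
  case: (eqVneq (f R) x) => [|zx]; first by left.
  case: (eqVneq (f R) y) => [|zy]; first by right.
  exfalso; apply: (E R); exists x => k; rewrite /R; case: ifP => _.
    apply: mk_second => //; by rewrite eq_sym.
  exact: mk_top.
case=> e.
  have := O_self j R T; rewrite /R eqxx e.
  apply: ((Sx j B).2) => tx.
  have := top_uniq tx (mk_top y x y); move/eqP: xy => xy e'; by apply: xy.
have := O_self i R T; rewrite /R (negbTE ij) e.
apply: ((Sy i A).2) => ty.
have := top_uniq ty (mk_top x y x); move/eqP: xy => xy e'; by apply: xy.
Qed.

Lemma best_no i (P P' : pref X) b' b : efficient f ->
  is_best P (option_set f i P') b' -> is_best P (option_set f i P) b ->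
  prel P b' b -> False.
Proof.
move=> E [Ob' Hb'] [Ob Hb] pb.
have [t tt] := top_ex P b.
have Ot := O_top i E tt.
have bt : b = t.
  case: (eqVneq b t) => // nbt; exfalso.
  apply: (@prel_asym _ P b t); [apply: Hb => //; by rewrite eq_sym | exact: tt].
subst b.
have nb : b' != t by apply/eqP => e; move: pb; rewrite e prel_irr.
exact: prel_asym pb (tt _ nb).
Qed.
End Main.

Theorem corollary2 (n : nat) (X : finType) (f : rule n X) :
  1 < n -> 1 < #|X| ->
  onto f -> efficient f -> anonymous f -> tops_only f ->
  (NOM f <->
   ((forall i x, ~ vetoes f i x) \/
    (exists y : X, forall i : 'I_n,
        (forall x, strongly_vetoes f i x <-> x = y) /\
        (forall x, vetoes f i x <-> x = y)))).
Proof.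
move=> n1 X1 On E A T.
have [x1 [y1 [_ _ nxy1]]] : exists x y : X, [/\ x \in X, y \in X & x != y] by apply/card_gt1P.
have other : forall x : X, exists b, b != x.
  move=> x; case: (eqVneq x1 x) => [e|ne]; last by exists x1.
  by exists y1; rewrite -e eq_sym.
split.
- move=> N.
  case: (classic (exists i x, vetoes f i x)) => [[i0 [y [Pa nOa]]]|nv]; last first.
    left=> i x vx; apply: nv; by exists i, x.
  right; exists y.
  have SV : forall i x, vetoes f i x -> strongly_vetoes f i x.
    move=> i x [Pb nOb] Pi; split.
      move=> nO tx; apply: nO; exact: O_top _ E tx.
    exact: veto_strong E T N nOb.
  have Vy : forall i, vetoes f i y.
    move=> i; exists Pa => O; apply: nOa; exact: anon _ A T O.
  have SVV : forall i x, strongly_vetoes f i x -> vetoes f i x.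
    move=> i x sv; have [b bx] := other x; exists (mk b b b); apply/(sv _).
    move=> tx; have := top_uniq tx (mk_top b b b); move/eqP: bx => bx e; apply: bx; by rewrite e.
  have SVy : forall i x, strongly_vetoes f i x -> x = y.
    move=> i x svx; case: (eqVneq x y) => // nxy; exfalso.
    apply: (two_vetoes E T n1 nxy) => j.
      exact: SV _ _ (veto_anon _ A T (SVV _ _ svx)).
    exact: SV _ _ (Vy j).
  move=> i; split=> x; split.
  + exact: SVy.
  + move=> ->; exact: SV (Vy i).
  + by move=> vx; apply: (SVy i); apply: SV.
  + by move=> ->.
- have bestno : forall i (Pi Pi' : pref X),
     (exists b' b, is_best Pi (option_set f i Pi') b' /\
                   is_best Pi (option_set f i Pi) b /\ prel Pi b' b) -> False.
    move=> i Pi Pi' [b' [b [h1 [h2 h3]]]]; exact: best_no E h1 h2 h3.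
  case.
  + move=> nov i Pi Pi' [_ [[w' [w [[Ow' Hw'] [[Ow Hw] pw]]]] | bst]]; last exact: bestno bst.
    have full : forall P x, option_set f i P x.
      move=> P x; apply: NNPP => h; apply: (nov i x); by exists P.
    have ww : w != w' by apply/eqP => e; move: pw; rewrite e prel_irr.
    exact: prel_asym pw (Hw' w (full _ _) ww).
  + move=> [y H] i Pi Pi' [_ [[w' [w [[Ow' Hw'] [[Ow Hw] pw]]]] | bst]]; last exact: bestno bst.
    have [SVi Vi] := H i.
    have full : forall P x, x != y -> option_set f i P x.
      move=> P x xy; apply: NNPP => h; move/eqP: xy; apply; apply/Vi; by exists P.
    have ww : w != w' by apply/eqP => e; move: pw; rewrite e prel_irr.
    case: (eqVneq w y) => [ewy|nwy]; last first.
      exact: prel_asym pw (Hw' w (full _ _ nwy) ww).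
    have svy : strongly_vetoes f i y by apply/SVi.
    have ty : is_top Pi y.
      apply: NNPP => nt; have := (svy Pi).2 nt; by rewrite -ewy.
    have w'y : w' != y by rewrite -ewy eq_sym.
    by apply: (prel_asym pw); rewrite ewy; apply: ty.
Qed.
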